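(* Let $X$ be a metric space, $U\subset X$, and $\varepsilon>0$. Let $\xi\colon U\to\ell^1(U)$ be a normed, locally supported map with $\varepsilon$-variation, and let $R\in\mathbb{N}$. Then there exists a locally supported map $\bar\xi\colon X\to\ell^1(X)$ such that (1) $\|\bar\xi_x\|_1=0$ for all $x\in X$ with $d(x,U)\ge R$; (2) $\bar\xi_x=\xi_x$ for all $x\in U$ (viewing $\ell^1(U)\subset\ell^1(X)$); (3) $\bar\xi$ has $\left((2R+1)\varepsilon+\frac1R\right)$-variation.
   Context: $\ell^1(Z)$ is the $\ell^1$-space of the underlying set of a metric space $Z$, and $\xi_x$ denotes the value of $\xi$ at $x$. A map $\xi\colon Z\to\ell^1(Z)$ has $\varepsilon$-variation if for each $k\in\mathbb{N}$ and all $x_1,x_2\in Z$ with $d(x_1,x_2)\le k$ one has $\|\xi_{x_1}-\xi_{x_2}\|_1\le k\varepsilon$. It is normed if $\|\xi_x\|_1=1$ for all $x$; it is $S$-locally supported if $\operatorname{supp}(\xi_x)\subset\bar B(x,S)$ for all $x$, and locally supported if it is $S$-locally supported for some $S>0$. *)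

(* Defs.v *)
From HB Require Import structures.
From mathcomp Require Import all_boot all_order all_algebra.
From mathcomp Require Import all_classical all_reals all_analysis.
Set Implicit Arguments. Unset Strict Implicit. Unset Printing Implicit Defensive.
Import Order.TTheory GRing.Theory Num.Theory.
Local Open Scope classical_set_scope.
Local Open Scope ring_scope.

Definition is_metric (R : realType) (X : choiceType) (d : X -> X -> R) : Prop :=
  (forall x y, 0 <= d x y) /\
  (forall x y, d x y = 0 <-> x = y) /\
  (forall x y, d x y = d y x) /\
  (forall x y z, d x z <= d x y + d y z).

Definition l1norm (R : realType) (X : choiceType) (f : X -> R) : \bar R :=
  \esum_(y in [set: X]) (`|f y|)%:E.

Definition in_l1 (R : realType) (X : choiceType) (f : X -> R) : Prop :=
  (l1norm f < +oo)%E.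

Definition has_variation (R : realType) (X : choiceType) (d : X -> X -> R)
  (D : set X) (xi : X -> X -> R) (eps : R) : Prop :=
  forall (k : nat) (x1 x2 : X), D x1 -> D x2 -> d x1 x2 <= k%:R ->
    (l1norm (fun y => (xi x1 y - xi x2 y)%R) <= (k%:R * eps)%:E)%E.

Definition normed_on (R : realType) (X : choiceType) (D : set X)
  (xi : X -> X -> R) : Prop :=
  forall x, D x -> l1norm (xi x) = 1%E.

Definition loc_supported_S (R : realType) (X : choiceType) (d : X -> X -> R)
  (D : set X) (xi : X -> X -> R) (S : R) : Prop :=
  forall x y, D x -> xi x y != 0 -> d x y <= S.

Definition loc_supported (R : realType) (X : choiceType) (d : X -> X -> R)
  (D : set X) (xi : X -> X -> R) : Prop :=
  exists2 S, 0 < S & loc_supported_S d D xi S.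

(* d(x, U) >= r, with d(x,U) = inf_{u in U} d(x,u) (= +oo if U is empty) *)
Definition dist_set_ge (R : realType) (X : choiceType) (d : X -> X -> R)
  (x : X) (U : set X) (r : R) : Prop :=
  forall u, U u -> r <= d x u.

(* Main.v *)
Require Import Defs.
From HB Require Import structures.
From mathcomp Require Import all_boot all_order all_algebra.
From mathcomp Require Import all_classical all_reals all_analysis.
From mathcomp Require Import lra.
Import Order.TTheory GRing.Theory Num.Theory.
Local Open Scope classical_set_scope.
Local Open Scope ring_scope.
Section H.
Set Implicit Arguments. Unset Strict Implicit.
Variables (R : realType) (X : choiceType).
Implicit Types (f g : X -> R).

Lemma l1norm_ge0 f : (0 <= l1norm f)%E.
Proof. by apply: esum_ge0 => y _; rewrite lee_fin. Qed.

Lemma l1norm0 f : (forall y, f y = 0) -> l1norm f = 0%E.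
Proof. by move=> h; apply: esum1 => y _; rewrite h normr0. Qed.

Lemma esumZle (c : R) (a : X -> \bar R) : 0 <= c -> (forall y, (0 <= a y)%E) ->
  (\esum_(y in [set: X]) (c%:E * a y) <= c%:E * \esum_(y in [set: X]) a y)%E.
Proof.
move=> c0 a0; apply: ge_ereal_sup => _ [F [finF FS] <-].
rewrite -ge0_mule_fsumr //; apply: lee_wpmul2l; first by rewrite lee_fin.
by apply: ereal_sup_ubound; exists F.
Qed.

Lemma l1Zle (c : R) f : (l1norm (fun y => c * f y)%R <= (`|c|%R)%:E * l1norm f)%E.
Proof.
rewrite /l1norm (eq_esum (b := fun y => ((`|c|%R)%:E * (`|f y|%R)%:E)%E)).
  by apply: esumZle => // y; rewrite lee_fin.
by move=> y _; rewrite normrM EFinM.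
Qed.

Lemma l1tri f g : (l1norm (fun y => f y + g y)%R <= l1norm f + l1norm g)%E.
Proof.
rewrite /l1norm -esumD; last 2 first.
- by move=> y _; rewrite lee_fin.
- by move=> y _; rewrite lee_fin.
by apply: le_esum => y _; rewrite -EFinD lee_fin ler_normD.
Qed.

Lemma l1key (a1 a2 : R) f1 f2 : 0 <= a2 ->
  (l1norm (fun y => a1 * f1 y - a2 * f2 y)%R <=
   (`|a1 - a2|%R)%:E * l1norm f1 + a2%:E * l1norm (fun y => f1 y - f2 y)%R)%E.
Proof.
move=> a20.
rewrite (_ : (fun y => a1 * f1 y - a2 * f2 y) =
   (fun y => (a1 - a2) * f1 y + a2 * (f1 y - f2 y))); last first.
  by apply: funext => y; rewrite mulrBl mulrBr addrA subrK.
apply: le_trans (l1tri _ _) _; apply: leeD; first exact: l1Zle.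
by apply: le_trans (l1Zle _ _) _; rewrite ger0_norm.
Qed.

Lemma l1symm f1 f2 : l1norm (fun y => f1 y - f2 y) = l1norm (fun y => f2 y - f1 y).
Proof. by apply: eq_esum => y _; rewrite distrC. Qed.

End H.
Theorem lemma5p4 (R : realType) (X : choiceType) (d : X -> X -> R)
  (hd : is_metric d) (U : set X) (eps : R) (heps : 0 < eps)
  (xi : X -> X -> R)
  (xi_l1 : forall x, U x -> in_l1 (xi x))
  (xi_U : forall x y, U x -> xi x y != 0 -> U y)
  (xi_normed : normed_on U xi)
  (xi_loc : loc_supported d U xi)
  (xi_var : has_variation d U xi eps)
  (Rn : nat) (hRn : (0 < Rn)%N) :
  exists xib : X -> X -> R,
    [/\ forall x, in_l1 (xib x),
        loc_supported d [set: X] xib,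
        forall x, dist_set_ge d x U Rn%:R -> l1norm (xib x) = 0%E,
        forall x, U x -> xib x = xi x &
        has_variation d [set: X] xib ((2 * Rn%:R + 1) * eps + Rn%:R^-1)].
Proof.
case: hd => [d0 [d_eq [dC dtri]]].
set r := Rn%:R.
have r0 : 0 < r by rewrite ltr0n.
have c0 : 0 <= (2 * r + 1) * eps + r^-1.
  by apply: addr_ge0; [apply: mulr_ge0; [lra|lra]|rewrite invr_ge0; lra].
have dxx x : d x x = 0 by apply/d_eq.
case: (pselect (exists u, U u)) => [[u0 Uu0]|noU]; last first.
  exists (fun _ _ => 0); split.
  - by move=> x; rewrite /in_l1 l1norm0 // ltry.
  - by exists 1 => // x y _; rewrite eqxx.
  - by move=> x _; rewrite l1norm0.
  - by move=> x Ux; exfalso; apply: noU; exists x.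
  - move=> k x1 x2 _ _ _; rewrite l1norm0 ?subrr // lee_fin.
    by apply: mulr_ge0 => //; rewrite ler0n.
pose dist x := inf [set d x u | u in U].
have D0 x : 0 <= dist x.
  by apply: lb_le_inf; [exists (d x u0), u0|move=> _ [u _ <-]].
have Dle x u : U u -> dist x <= d x u.
  move=> Uu; apply: ge_inf; last by exists u.
  by exists 0 => _ [v _ <-].
have Dlip x1 x2 : dist x1 <= dist x2 + d x1 x2.
  rewrite -lerBlDr; apply: lb_le_inf; first by exists (d x2 u0), u0.
  move=> _ [u Uu <-]; rewrite lerBlDr.
  by apply: le_trans (Dle _ _ Uu) _; rewrite addrC dtri.
have Dlt x : dist x < r -> exists u, U u /\ d x u < r.
  move=> /inf_lt [|_ [u Uu <-] h]; first by exists (d x u0), u0.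
  by exists u.
have DU x : U x -> dist x = 0.
  by move=> Ux; apply/le_anti; rewrite D0 andbT -(dxx x) Dle.
have ri : 0 < r^-1 by rewrite invr_gt0.
pose a x := Num.max 0 (1 - dist x / r).
have a0 x : 0 <= a x by rewrite /a le_max lexx.
have apos x : 0 < a x -> dist x < r.
  rewrite /a lt_max ltxx /= subr_gt0 => h.
  by rewrite -(ltr_pM2r ri) mulfV ?gt_eqF.
have azero x : r <= dist x -> a x = 0.
  move=> h; rewrite /a; apply/max_idPl.
  rewrite subr_le0 ler_pdivlMr // mul1r //.
have aU x : U x -> a x = 1.
  by move=> Ux; rewrite /a DU // mul0r subr0; apply/max_idPr.
have alip x1 x2 : `|a x1 - a x2| <= d x1 x2 / r.
  have h1 := Dlip x1 x2; have h2 := Dlip x2 x1; rewrite dC in h2.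
  have hd : `|dist x1 / r - dist x2 / r| <= d x1 x2 / r.
    rewrite -mulrBl normrM (gtr0_norm ri) ler_pM2r ?invr_gt0 //.
    rewrite ler_norml; apply/andP; split; lra.
  move: hd; rewrite /a !ler_norml => /andP[hA hB].
  case: (leP 0 (1 - dist x1 / r)) => [e1|e1]; rewrite ?(max_idPr e1) ?(max_idPl (ltW e1));
  case: (leP 0 (1 - dist x2 / r)) => [e2|e2]; rewrite ?(max_idPr e2) ?(max_idPl (ltW e2));
  apply/andP; split; lra.
have [uo huo] : exists uo : X -> X, forall x, (U x -> uo x = x) /\
    ((exists u, U u /\ d x u < r) -> U (uo x) /\ d x (uo x) < r).
  suff hex : forall x, exists y, (U x -> y = x) /\
    ((exists u, U u /\ d x u < r) -> U y /\ d x y < r).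
    by have [f hf] := choice hex; exists f.
  move=> x; case: (pselect (U x)) => Ux.
    by exists x; split => // _; rewrite dxx.
  case: (pselect (exists u, U u /\ d x u < r)) => [[u hu]|nu].
    by exists u; split.
  by exists x; split.
have P x : 0 < a x -> U (uo x) /\ d x (uo x) < r.
  by move=> /apos /Dlt; apply: (huo x).2.
have [S S0 hS] := xi_loc.
exists (fun x y => a x * xi (uo x) y); split.
- move=> x; rewrite /in_l1; apply: (le_lt_trans (l1Zle (a x) (xi (uo x)))).
  have [ax0|axp] := eqVneq (a x) 0; first by rewrite ax0 normr0 mul0e ltry.
  have [Uu _] : U (uo x) /\ d x (uo x) < r by apply: P; rewrite lt_def axp a0.
  by rewrite xi_normed // mule1 ltry.
- exists (r + S); first lra.
  move=> x y _; rewrite mulf_eq0 negb_or => /andP[ha hx].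
  have axp : 0 < a x by rewrite lt_def ha a0.
  have [Uu du] := P x axp.
  have := hS _ _ Uu hx; have := dtri x (uo x) y; lra.
- move=> x hx; apply: l1norm0 => y; rewrite azero ?mul0r //.
  apply: lb_le_inf; first by exists (d x u0), u0.
  by move=> _ [u Uu <-]; exact: hx u Uu.
- by move=> x Ux; apply: funext => y; rewrite aU // (huo x).1 // mul1r.
- have a1 x : a x <= 1.
    by rewrite /a ge_max ler01 /= lerBlDr lerDl mulr_ge0 // ltW.
  move=> k x1 x2 _ _ hk.
  have key : forall z1 z2, d z1 z2 <= k%:R -> (0 < k)%N -> 0 < a z1 ->
     (l1norm (fun y => a z1 * xi (uo z1) y - a z2 * xi (uo z2) y)%R
       <= (k%:R * ((2 * r + 1) * eps + r^-1))%:E)%E.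
    move=> z1 z2 hz k0 ap1; have [U1 d1] := P z1 ap1.
    have K1 : 1 <= (k%:R : R) by rewrite ler1n.
    have hal := alip z1 z2.
    have hdr : d z1 z2 / r <= k%:R / r by rewrite ler_pM2r.
    have Kre : 0 <= k%:R * r * eps by rewrite !mulr_ge0 // ?ltW // ler0n.
    have Ke : 0 <= k%:R * eps by rewrite !mulr_ge0 // ?ltW // ler0n.
    apply: (le_trans (l1key (a z1) (xi (uo z1)) (xi (uo z2)) (a0 z2))).
    rewrite xi_normed // mule1.
    have [a20|a2p] := eqVneq (a z2) 0.
      rewrite a20 mul0e adde0 lee_fin; rewrite a20 in hal.
      have : (k%:R : R) / r = k%:R * r^-1 by [].
      lra.
    have a2p' : 0 < a z2 by rewrite lt_def a2p a0.
    have [U2 d2] := P z2 a2p'.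
    have hdist : d (uo z1) (uo z2) <= (2 * Rn + k)%N%:R.
      rewrite natrD natrM.
      have := dtri (uo z1) z1 (uo z2); have := dtri z1 z2 (uo z2).
      rewrite (dC (uo z1) z1) -/r; lra.
    have hv := xi_var _ _ _ U1 U2 hdist.
    apply: le_trans (leeD (lexx _) (lee_wpmul2l _ hv)) _; first by rewrite lee_fin.
    rewrite -EFinM -EFinD lee_fin natrD natrM -/r.
    have ha2 := a1 z2.
    have : a z2 * ((2%:R * r + k%:R) * eps) <= (2%:R * r + k%:R) * eps.
      by rewrite ler_piMl //; apply: mulr_ge0; lra.
    have : (k%:R : R) / r = k%:R * r^-1 by [].
    have : 0 <= (k%:R - 1) * r * eps by apply: mulr_ge0; [apply: mulr_ge0|]; lra.
    nra.
  case: k hk key => [|k] hk key.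
    have /d_eq <- : d x1 x2 = 0 by apply/le_anti; rewrite hk d0.
    by rewrite l1norm0 ?mul0r // => y; rewrite subrr.
  have [ap1|] := ltP 0 (a x1); first exact: key.
  move=> an1; have ax1 : a x1 = 0 by apply/le_anti; rewrite an1 a0.
  have [ap2|] := ltP 0 (a x2).
    by rewrite l1symm; apply: key => //; rewrite dC.
  move=> an2; have ax2 : a x2 = 0 by apply/le_anti; rewrite an2 a0.
  rewrite l1norm0; last by move=> y; rewrite ax1 ax2 !mul0r subrr.
  by rewrite lee_fin mulr_ge0.
Qed.
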